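(* Let $R$ be an absolutely integrally closed ring, $D$ an integral domain, and $\varphi: R\to D$ an integral ring homomorphism. Then $\varphi$ is surjective and $D$ is an absolutely integrally closed domain.
   Context: All rings are commutative with $1$ and ring maps preserve $1$. An integral domain $A$ is absolutely integrally closed if $A$ is integrally closed in its field of fractions $K$ and $K$ is algebraically closed. A ring $R$ is absolutely integrally closed if $R\cong A_1\times\cdots\times A_n$ for finitely many absolutely integrally closed domains $A_1,\dots,A_n$. A ring map $\varphi: R\to D$ is integral if every element of $D$ is integral over $\varphi(R)$. *)

(* Defs.v *)
From HB Require Import structures.
From mathcomp Require Import all_boot all_order all_algebra.
Set Implicit Arguments. Unset Strict Implicit. Unset Printing Implicit Defensive.
Import GRing.Theory.
Local Open Scope ring_scope.

Definition integrally_closed_in_frac (A : idomainType) : Prop :=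
  forall x : {fraction A}, integralOver (@tofrac A) x -> exists a : A, x = tofrac a.

Definition aic_domain (A : idomainType) : Prop :=
  integrally_closed_in_frac A /\ GRing.closed_field_axiom {fraction A}.

(* R ~= A_1 x ... x A_n, expressed via the projections f_i : R -> A_i such
   that the induced map R -> prod_i A_i is a bijection. *)
Definition aic_ring (R : comNzRingType) : Prop :=
  exists (n : nat) (A : 'I_n -> idomainType) (f : forall i, {rmorphism R -> A i}),
    [/\ forall i, aic_domain (A i),
        (forall x y : R, (forall i, f i x = f i y) -> x = y) &
        (forall a : forall i, A i, exists x : R, forall i, f i x = a i)].

Definition integral_map (R D : comNzRingType) (phi : {rmorphism R -> D}) : Prop :=
  integralRange phi.

(* Main.v *)
Require Import Defs.
From HB Require Import structures.
From mathcomp Require Import all_boot all_order all_algebra.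
From mathcomp Require Import ring.
Local Open Scope ring_scope.
Import GRing.Theory.
Section FR.
Local Open Scope quotient_scope.
Lemma frac_repr (R : idomainType) (x : {fraction R}) :
  exists a b : R, b != 0 /\ x * tofrac b = tofrac a.
Proof.
exists (\n_(repr x)), (\d_(repr x)); split; first exact: denom_ratioP.
rewrite -{1}[x]reprK.
set r := repr x.
unlock FracField.tofrac.
rewrite -[X in X = _](FracField.pi_mul r (Ratio \d_r 1)).
apply/eqmodP; rewrite /= FracField.equivfE /FracField.mulf /=.
have hd := denom_ratioP r.
by rewrite !numden_Ratio ?mulf_neq0 ?oner_neq0 // ?mulr1 ?mul1r /=; rewrite mulrC.
Qed.
End FR.

Lemma key_eq (K : fieldType) (a b x y z : K) : x != 0 ->
  a * b * z * y = b * (y * x^-1) * (a * x * z).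
Proof. move=> x0. field. exact x0. Qed.

Lemma frac_closed (D : idomainType) :
  GRing.closed_field_axiom D -> GRing.closed_field_axiom {fraction D}.
Proof.
move=> HD m P m0.
have [c [c0 Hc]] : exists c : D, c != 0 /\
    forall i, (i < m)%N -> exists d, tofrac c * P i = tofrac d.
  elim: m {m0} => [|k [c [c0 Hc]]]; first by exists 1; split; rewrite ?oner_neq0.
  have [a [b [b0 Hab]]] := frac_repr _ (P k).
  exists (c * b); split; first by rewrite mulf_neq0.
  move=> i; rewrite ltnS leq_eqVlt => /orP [/eqP ->|ik].
    by exists (c * a); rewrite rmorphM /= -mulrA [_ * P k]mulrC Hab rmorphM.
  have [d Hd] := Hc i ik.
  by exists (d * b); rewrite rmorphM /= mulrAC Hd rmorphM.
have Hex : forall i, exists d, (i < m)%N ==> (tofrac c * P i == tofrac d).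
  move=> i; case: (ltnP i m) => im; last by exists 0.
  by have [d Hd] := Hc i im; exists d; rewrite Hd eqxx.
pose d i := xchoose (Hex i).
have Hd : forall i, (i < m)%N -> tofrac c * P i = tofrac (d i).
  by move=> i im; have := xchooseP (Hex i); move=> /implyP /(_ im) /eqP.
have [y Hy] := HD m (fun i => d i * c ^+ (m - i.+1)) m0.
have C0 : tofrac c != 0 by rewrite tofrac_eq0.
exists (tofrac y / tofrac c).
apply: (mulIf (expf_neq0 m C0)).
rewrite -exprMn divfK // -rmorphXn /= Hy mulr_suml rmorph_sum /=.
apply: eq_bigr => i _.
have EC : tofrac c ^+ m = tofrac c ^+ i.+1 * tofrac c ^+ (m - i.+1).
  by rewrite -exprD subnKC // ltn_ord.
have Ci : tofrac c ^+ i != 0 by rewrite expf_neq0.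
rewrite !rmorphM /= !rmorphXn /= -Hd //.
rewrite EC exprS exprMn exprVn.
exact: key_eq.
Qed.

Lemma monic_root (A : idomainType) (HA : GRing.closed_field_axiom A)
  (p : {poly A}) : p \is monic -> (1 < size p)%N -> exists a, root p a.
Proof.
move=> mp sp.
set n := (size p).-1.
have n0 : (0 < n)%N by rewrite /n -subn1 subn_gt0.
have Esz : size p = n.+1 by rewrite /n prednK // ltnW.
have [x Hx] := HA n (fun i => - p`_i) n0.
exists x; rewrite /root horner_coef Esz big_ord_recr /=.
have -> : p`_n = 1 by rewrite -(monicP mp) lead_coefE.
rewrite mul1r Hx -big_split /= big1 //= => i _.
by rewrite mulNr addrN.
Qed.

Lemma lift_root (A : idomainType) (HA : GRing.closed_field_axiom A)
  (B : idomainType) (g : {rmorphism A -> B}) (p : {poly A}) :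
  p \is monic -> forall d, root (map_poly g p) d -> exists a, g a = d.
Proof.
move: {2}(size p) (leqnn (size p)) => m; elim: m p => [|m IH] p sp mp d rd.
  by have := monic_neq0 mp; rewrite -size_poly_eq0; move: sp; case: (size p).
have [sp1|sp1] := leqP (size p) 1.
  have p1 : p = 1.
    have s1 : size p = 1%N.
      by apply/eqP; rewrite eqn_leq sp1 lt0n size_poly_eq0 monic_neq0.
    have h : p`_0 = 1 by rewrite -(monicP mp) lead_coefE s1.
    by rewrite (size1_polyC sp1) h.
  by move: rd; rewrite p1 rmorph1 /root hornerC oner_eq0.
have [a ra] := @monic_root _ HA _ mp sp1.
have [q Hq] := factor_theorem p a ra.
have mq : q \is monic by rewrite -(monicMr q (monicXsubC a)) -Hq.
move: rd; rewrite Hq rmorphM /= map_polyXsubC rootM root_XsubC.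
case/orP => [rq|/eqP ->]; last by exists a.
apply: (IH q _ mq d rq).
have q0 : q != 0 by apply: monic_neq0.
move: sp; rewrite Hq size_Mmonic ?monicXsubC // size_XsubC addn2 /=.
by [].
Qed.
Lemma aic_closed (A : idomainType) : aic_domain A -> GRing.closed_field_axiom A.
Proof.
case=> [ic cl] n P n0.
have [x Hx] := cl n (fun i => tofrac (P i)) n0.
set q : {poly A} := 'X^n - \poly_(i < n) P i.
have mq : q \is monic.
  rewrite monicE /q lead_coefDl ?lead_coefXn // size_polyXn size_polyN ltnS.
  exact: size_poly.
have [a Ea] : exists a, x = tofrac a.
  apply: ic; exists q => //.
  rewrite /root /q poly_def rmorphB /= map_polyXn rmorph_sum /=.
  rewrite hornerD hornerN hornerXn horner_sum Hx subr_eq0; apply/eqP.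
  apply: eq_bigr => i _; rewrite map_polyZ /= map_polyXn hornerZ hornerXn //.
exists a; apply/eqP; rewrite -tofrac_eq rmorphXn /= -Ea Hx rmorph_sum /=.
by apply/eqP/eq_bigr => i _; rewrite rmorphM rmorphXn /= Ea.
Qed.
Section Factor.
Variables (R : comNzRingType) (D : idomainType) (phi : {rmorphism R -> D}).
Variables (B : idomainType) (g : {rmorphism R -> B}).
Hypothesis gsurj : forall b : B, exists x : R, g x = b.
Hypothesis gphi : forall x y : R, g x = g y -> phi x = phi y.

Lemma gsurj' (b : B) : exists x : R, g x == b.
Proof. by have [x Hx] := gsurj b; exists x; rewrite Hx. Qed.

Definition psi (b : B) : D := let _ := gphi in phi (xchoose (gsurj' b)).

Lemma psiE x : psi (g x) = phi x.
Proof. by apply: gphi; apply/eqP; exact: (xchooseP (gsurj' (g x))). Qed.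

Lemma psi_zmod : zmod_morphism psi.
Proof.
move=> a b; have [xa <-] := gsurj a; have [xb <-] := gsurj b.
by rewrite -rmorphB !psiE rmorphB.
Qed.

Lemma psi_monoid : monoid_morphism psi.
Proof.
split; first by rewrite -(rmorph1 g) psiE rmorph1.
move=> a b; have [xa <-] := gsurj a; have [xb <-] := gsurj b.
by rewrite -rmorphM !psiE rmorphM.
Qed.

HB.instance Definition _ := GRing.isZmodMorphism.Build B D psi psi_zmod.
HB.instance Definition _ := GRing.isMonoidMorphism.Build B D psi psi_monoid.
End Factor.

Theorem mainTheorem19 (R : comNzRingType) (D : idomainType)
  (phi : {rmorphism R -> D}) :
  aic_ring R -> integral_map phi ->
  (forall d : D, exists r : R, phi r = d) /\ aic_domain D.
Proof.
case=> n [A [f [aic inj surj]]] Hint.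
have exe : forall i, exists x : R,
    [forall k, f k x == (if k == i then 1 else 0)].
  move=> i; have [x Hx] := surj (fun k => if k == i then 1 else 0).
  by exists x; apply/forallP => k; rewrite Hx.
pose e i := xchoose (exe i).
have He : forall i k, f k (e i) = if k == i then 1 else 0.
  by move=> i k; exact: (eqP (forallP (xchooseP (exe i)) k)).
have sum_e : \sum_i e i = 1.
  apply: inj => k; rewrite rmorph_sum rmorph1 /= (bigD1 k) //= He eqxx.
  by rewrite big1 ?addr0 // => i /negbTE ik; rewrite He eq_sym ik.
have [j ej] : exists j, phi (e j) != 0.
  apply/existsP; apply: contraT; rewrite negb_exists => /forallP H.
  suff : (1 : D) == 0 by rewrite oner_eq0.
  rewrite -(rmorph1 phi) -sum_e rmorph_sum big1 // => i _.
  by apply/eqP; move: (H i); rewrite negbK.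
have ee : e j * e j = e j.
  apply: inj => k; rewrite rmorphM He.
  by case: (k == j); rewrite ?mulr1 ?mulr0.
have pej : phi (e j) = 1 by apply: (mulfI ej); rewrite -rmorphM ee mulr1.
have gphi : forall x y, f j x = f j y -> phi x = phi y.
  move=> x y Hxy.
  have : x * e j = y * e j.
    apply: inj => k; rewrite !rmorphM He.
    have [->|kj] := eqVneq k j; first by rewrite Hxy.
    by rewrite !mulr0.
  by move/(congr1 phi); rewrite !rmorphM pej !mulr1.
have gsurj : forall b : A j, exists x, f j x = b.
  move=> b; have [x Hx] := surj (dfwith (fun k => 0 : A k) b).
  by exists x; rewrite Hx dfwith_in.
pose ps : {rmorphism A j -> D} := psi R D phi (A j) (f j) gsurj gphi.
have psE : forall x, ps (f j x) = phi x := @psiE R D phi (A j) (f j) gsurj gphi.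
have clA := @aic_closed _ (aic j).
have surjD : forall d, exists r, phi r = d.
  move=> d; have [p mp rp] := Hint d.
  have mpA : map_poly (f j) p \is monic := monic_map (f j) mp.
  have [a Ha] : exists a, ps a = d.
    apply: (@lift_root _ clA _ ps _ mpA).
    rewrite -map_poly_comp.
    have E : (ps \o f j) =1 phi := psE.
    by rewrite (eq_map_poly E).
  by have [x Hx] := gsurj a; exists x; rewrite -psE Hx.
split => //.
have clD : GRing.closed_field_axiom D.
  move=> m P m0.
  have exP : forall i, exists x : R, phi x == P i.
    by move=> i; have [x Hx] := surjD (P i); exists x; rewrite Hx.
  pose Q i := f j (xchoose (exP i)).
  have [a Ha] := clA m Q m0.
  exists (ps a); rewrite -rmorphXn Ha rmorph_sum; apply: eq_bigr => i _.
  rewrite rmorphM rmorphXn /Q psE; congr (_ * _).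
  exact: eqP (xchooseP (exP i)).
split; last exact: frac_closed.
move=> x [p mp rp].
by have [a <-] := @lift_root _ clD _ (@tofrac D) _ mp _ rp; exists a.
Qed.
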